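(* Let $X=\mathbb{Z}$, $\beta\in Sym(X)$ the translation $x\mapsto x+1$, and $n,m\geq1$. Let $c=c(a_1,\dots,a_n,b)$ be a nontrivial cyclically reduced word in the free group $\mathbb{F}_{n+1}=\langle a_1,\dots,a_n,b\rangle$ with exponent sum of $b$ equal to zero, and $d=d(a'_1,\dots,a'_m,b')$ a nontrivial cyclically reduced word in $\mathbb{F}_{m+1}=\langle a'_1,\dots,a'_m,b'\rangle$ with exponent sum of $b'$ equal to zero. Let $\alpha=(\alpha_1,\dots,\alpha_n)\in Sym(X)^n$ be such that, for the action of $\mathbb{F}_{n+1}$ on $X$ given by $a_i\mapsto\alpha_i$, $b\mapsto\beta$, and with $c$ acting as $c(\alpha_1,\dots,\alpha_n,\beta)$: the action is faithful and transitive; for every $w\in\mathbb{F}_{n+1}\setminus\langle c\rangle$ there are infinitely many $x$ with $cx=x$, $cwx=wx$, $wx\neq x$; there is a Følner sequence $(A_k)_{k\geq1}$ for this action consisting of pairwise disjoint sets with $|A_k|=k$, each pointwise fixed by $c$; for every $k\geq1$ there are infinitely many $\langle c\rangle$-orbits of size $k$; every $\langle c\rangle$-orbit is finite; and every finite index subgroup of $\mathbb{F}_{n+1}$ acts transitively. Let $\alpha'=(\alpha'_1,\dots,\alpha'_m)\in Sym(X)^m$ satisfy the same properties for $\mathbb{F}_{m+1}$ (via $a'_j\mapsto\alpha'_j$, $b'\mapsto\beta$) and $d$, with Følner sequence $(B_k)_{k\geq1}$. Let $Z=\{\sigma\in Sym(X):\sigma\, c(\alpha,\beta)=d(\alpha',\beta)\,\sigma\}$,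 a closed subset of $Sym(X)$ (topology of pointwise convergence). For $\sigma\in Z$, let $\Gamma=\mathbb{F}_{n+1}\ast_{c=d}\mathbb{F}_{m+1}$ act on $X$ by $g\cdot x=g(\alpha,\beta)x$ for $g\in\mathbb{F}_{n+1}$ and $h\cdot x=\sigma^{-1}h(\alpha',\beta)\sigma x$ for $h\in\mathbb{F}_{m+1}$. Then the set $\mathcal{O}_1=\{\sigma\in Z:\text{this action of }\Gamma\text{ on }X\text{ is faithful}\}$ is generic in $Z$.
   Context: A subset of a Baire space is meagre if it is a countable union of closed sets with empty interior, and generic (dense $G_\delta$) if its complement is meagre. $Z$ is closed in the Polish space $Sym(X)$, hence a Baire space. A sequence $(A_k)$ of finite non-empty subsets is Følner for an action of $\Gamma$ if $|A_k\triangle gA_k|/|A_k|\to0$ for all $g\in\Gamma$. $\mathbb{F}_{n+1}\ast_{c=d}\mathbb{F}_{m+1}$ denotes the amalgamated free product identifying $\langle c\rangle$ with $\langle d\rangle$ via $c\mapsto d$. *)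

(* Defs.v *)
From mathcomp Require Import all_boot all_order all_algebra.
From Stdlib Require Import Relations.
Set Implicit Arguments. Unset Strict Implicit. Unset Printing Implicit Defensive.
Import Order.TTheory GRing.Theory Num.Theory.
Local Open Scope ring_scope.

Record perm := Perm {
  pfun : int -> int; pinv : int -> int;
  pK : cancel pfun pinv; pKV : cancel pinv pfun }.

Lemma beta_K : cancel (fun x : int => x + 1) (fun x => x - 1).
Proof. by move=> x; rewrite addrK. Qed.
Lemma beta_KV : cancel (fun x : int => x - 1) (fun x => x + 1).
Proof. by move=> x; rewrite subrK. Qed.
Definition beta : perm := Perm beta_K beta_KV.

Lemma pcomp_K (p q : perm) : cancel (pfun p \o pfun q) (pinv q \o pinv p).
Proof. by move=> x /=; rewrite pK pK. Qed.
Lemma pcomp_KV (p q : perm) : cancel (pinv q \o pinv p) (pfun p \o pfun q).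
Proof. by move=> x /=; rewrite pKV pKV. Qed.
Definition pcomp (p q : perm) : perm := Perm (pcomp_K p q) (pcomp_KV p q).
Definition pinvp (p : perm) : perm := Perm (pKV p) (pK p).

(* A letter is (generator, inverted?) ; a word is a list of letters,
   read as a product l_1 l_2 ... l_k. *)
Definition linv {A : Type} (l : A * bool) : A * bool := (l.1, ~~ l.2).
Definition winv {A : Type} (w : seq (A * bool)) := rev (map linv w).

Fixpoint reduced {A : eqType} (w : seq (A * bool)) : bool :=
  match w with
  | l1 :: ((l2 :: _) as w') => (l2 != linv l1) && reduced w'
  | _ => true
  end.

Definition cyc_reduced {A : eqType} (w : seq (A * bool)) : bool :=
  reduced w && (if w is l :: _ then last l w != linv l else true).

Fixpoint reduce {A : eqType} (w : seq (A * bool)) : seq (A * bool) :=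
  match w with
  | [::] => [::]
  | l :: w' => match reduce w' with
               | l' :: r => if l' == linv l then r else l :: l' :: r
               | [::] => [:: l]
               end
  end.

Definition zpow {A : Type} (w : seq (A * bool)) (k : int) : seq (A * bool) :=
  match k with
  | Posz n => flatten (nseq n w)
  | Negz n => flatten (nseq n.+1 (winv w))
  end.

Definition expsum {A : eqType} (a : A) (w : seq (A * bool)) : int :=
  (count (pred1 (a, false)) w)%:Z - (count (pred1 (a, true)) w)%:Z.

(* the action of a word given an assignment of permutations to generators:
   w = l_1 ... l_k acts as l_1 o ... o l_k *)
Definition weval {A : Type} (f : A -> perm) (w : seq (A * bool)) (x : int) : int :=
  foldr (fun l y => if l.2 then pinv (f l.1) y else pfun (f l.1) y) x w.

(* assignment a_i |-> alpha_i, b |-> beta ; b is the letter None *)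
Definition act_of {n : nat} (alpha : 'I_n -> perm) (o : option 'I_n) : perm :=
  match o with Some i => alpha i | None => beta end.

(* subgroups of a free group, as sets of words closed under free equality *)
Definition is_subgroup {A : eqType} (H : seq (A * bool) -> Prop) : Prop :=
  [/\ H [::],
      (forall u v, H u -> H v -> H (u ++ v)),
      (forall u, H u -> H (winv u)) &
      (forall u v, reduce u = reduce v -> H u -> H v)].

(* finitely many left cosets r H cover the group *)
Definition finite_index {A : eqType} (H : seq (A * bool) -> Prop) : Prop :=
  exists R : seq (seq (A * bool)), forall w, exists r, r \in R /\ H (winv r ++ w).

Definition symdiff_size (s t : seq int) : nat :=
  (count (fun x => x \notin t) s + count (fun y => y \notin s) t)%N.

Section GoodAction.
Variables (A : eqType) (f : A -> perm) (c : seq (A * bool)).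

Definition c_orbit (x y : int) : Prop := exists j : int, weval f (zpow c j) x = y.

Definition orbit_size (k : nat) (x : int) : Prop :=
  exists s : seq int, [/\ uniq s, size s = k & forall y, y \in s <-> c_orbit x y].

Definition good_action : Prop :=
      (forall w, (forall x, weval f w x = x) -> reduce w = [::]) /\
      (forall x y, exists w, weval f w x = y) /\
      (forall w, (forall k : int, reduce w <> reduce (zpow c k)) ->
         forall L : seq int, exists x, x \notin L /\
           [/\ weval f c x = x, weval f c (weval f w x) = weval f w x
             & weval f w x <> x]) /\
      (exists As : nat -> seq int,
         [/\ (forall k, (0 < k)%N -> uniq (As k) /\ size (As k) = k),
             (forall k l, (0 < k)%N -> (0 < l)%N -> k <> l ->
                forall x, x \in As k -> x \notin As l),
             (forall k, (0 < k)%N -> forall x, x \in As k -> weval f c x = x) &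
             (forall g, forall eps : rat, 0 < eps -> exists K : nat,
                forall k, (K <= k)%N -> (0 < k)%N ->
                  ((symdiff_size (As k) (map (weval f g) (As k)))%:R / k%:R : rat)
                    < eps)]) /\
      (forall k, (0 < k)%N -> forall L : seq int,
         exists x, orbit_size k x /\ forall y, y \in L -> ~ c_orbit x y) /\
      (forall x, exists s : seq int, forall y, c_orbit x y -> y \in s) /\
      (forall H, is_subgroup H -> finite_index H ->
         forall x y, exists h, H h /\ weval f h x = y).
End GoodAction.

Inductive pres_step {A : Type} (r : seq (A * bool)) :
  seq (A * bool) -> seq (A * bool) -> Prop :=
| pstep_free u v l : pres_step r (u ++ [:: l; linv l] ++ v) (u ++ v)
| pstep_rel u v : pres_step r (u ++ r ++ v) (u ++ v).

Definition pres_eq {A : Type} (r : seq (A * bool)) :=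
  clos_refl_sym_trans _ (pres_step r).

(* generators: inl (a_i / b), inr (a'_j / b'); single relator c d^{-1} *)
Definition amal_rel {n m : nat} (c : seq (option 'I_n * bool))
  (d : seq (option 'I_m * bool)) : seq ((option 'I_n + option 'I_m) * bool) :=
  map (fun l => (inl l.1, l.2)) c ++ winv (map (fun l => (inr l.1, l.2)) d).

Definition gamma_f {n m : nat} (alpha : 'I_n -> perm) (alpha' : 'I_m -> perm)
  (sigma : perm) (g : option 'I_n + option 'I_m) : perm :=
  match g with
  | inl o => act_of alpha o
  | inr o => pcomp (pinvp sigma) (pcomp (act_of alpha' o) sigma)
  end.

Definition Zset {n m : nat} (alpha : 'I_n -> perm) (alpha' : 'I_m -> perm)
  (c : seq (option 'I_n * bool)) (d : seq (option 'I_m * bool)) (sigma : perm) :=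
  forall x, pfun sigma (weval (act_of alpha) c x) = weval (act_of alpha') d (pfun sigma x).

Definition O1 {n m : nat} (alpha : 'I_n -> perm) (alpha' : 'I_m -> perm)
  (c : seq (option 'I_n * bool)) (d : seq (option 'I_m * bool)) (sigma : perm) :=
  Zset alpha alpha' c d sigma /\
  forall W, (forall x, weval (gamma_f alpha alpha' sigma) W x = x) ->
    pres_eq (amal_rel c d) W [::].

Definition agree (s t : perm) (L : seq int) := forall x, x \in L -> pfun s x = pfun t x.

Definition rel_closed (Z F : perm -> Prop) :=
  (forall s, F s -> Z s) /\
  forall s, Z s -> ~ F s -> exists L, forall t, Z t -> agree s t L -> ~ F t.

Definition rel_empty_interior (Z F : perm -> Prop) :=
  forall s, F s -> forall L, exists t, [/\ Z t, agree s t L & ~ F t].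

Definition generic_in (Z S : perm -> Prop) :=
  (forall s, S s -> Z s) /\
  exists F : nat -> perm -> Prop,
    (forall k, rel_closed Z (F k) /\ rel_empty_interior Z (F k)) /\
    forall s, (Z s /\ ~ S s) <-> exists k, F k s.

(* Main.v *)
Require Import Defs.
From mathcomp Require Import all_boot all_order all_algebra.
From Stdlib Require Import Relations Classical.
Set Implicit Arguments. Unset Strict Implicit. Unset Printing Implicit Defensive.
Local Open Scope ring_scope.

Section Weval.
Variables (A : Type) (f : A -> perm).

Lemma weval_cat u v x : weval f (u ++ v) x = weval f u (weval f v x).
Proof. by rewrite /weval foldr_cat. Qed.

Lemma linvK (l : A * bool) : linv (linv l) = l.
Proof. by case: l => a [] . Qed.

Lemma winvK (w : seq (A * bool)) : winv (winv w) = w.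
Proof. by rewrite /winv map_rev revK -map_comp (eq_map (@linvK)) map_id. Qed.

Lemma winv_cons l (w : seq (A * bool)) : winv (l :: w) = winv w ++ [:: linv l].
Proof. by rewrite /winv /= rev_cons cats1. Qed.

Lemma weval_winvK w x : weval f (winv w) (weval f w x) = x.
Proof.
elim: w x => [//|l w IH] x.
rewrite winv_cons weval_cat /=.
by case: l => a [] /=; rewrite ?pK ?pKV IH.
Qed.

Lemma weval_winvKV w x : weval f w (weval f (winv w) x) = x.
Proof. by rewrite -{1}(winvK w) weval_winvK. Qed.

Lemma weval_inj w : injective (weval f w).
Proof. by move=> x y H; rewrite -(weval_winvK w x) H weval_winvK. Qed.
End Weval.

Section Pres.
Variables (A : Type) (r : seq (A * bool)).

Lemma pres_refl x : pres_eq r x x.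
Proof. exact: rst_refl. Qed.
Lemma pres_sym x y : pres_eq r x y -> pres_eq r y x.
Proof. exact: rst_sym. Qed.
Lemma pres_trans x y z : pres_eq r x y -> pres_eq r y z -> pres_eq r x z.
Proof. exact: rst_trans. Qed.

Lemma pres_cong u v x y : pres_eq r x y -> pres_eq r (u ++ x ++ v) (u ++ y ++ v).
Proof.
elim=> {x y} [x y H| x | x y _ IH | x y z _ IH1 _ IH2].
- apply: rst_step; case: H => [a b l|a b].
  + have -> : u ++ (a ++ [:: l; linv l] ++ b) ++ v = (u ++ a) ++ [:: l; linv l] ++ (b ++ v) by rewrite !catA.
    have -> : u ++ (a ++ b) ++ v = (u ++ a) ++ (b ++ v) by rewrite !catA.
    exact: pstep_free.
  + have -> : u ++ (a ++ r ++ b) ++ v = (u ++ a) ++ r ++ (b ++ v) by rewrite !catA.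
    have -> : u ++ (a ++ b) ++ v = (u ++ a) ++ (b ++ v) by rewrite !catA.
    exact: pstep_rel.
- exact: rst_refl.
- exact: rst_sym.
- exact: rst_trans IH2.
Qed.

Lemma pres_congl u x y : pres_eq r x y -> pres_eq r (u ++ x) (u ++ y).
Proof. by move=> H; have := pres_cong u [::] H; rewrite !cats0. Qed.
Lemma pres_congr v x y : pres_eq r x y -> pres_eq r (x ++ v) (y ++ v).
Proof. by move=> H; exact: (pres_cong [::] v H). Qed.
Lemma pres_cat x y x' y' : pres_eq r x x' -> pres_eq r y y' -> pres_eq r (x ++ y) (x' ++ y').
Proof. by move=> H1 H2; apply: pres_trans (pres_congr _ H1) (pres_congl _ H2). Qed.

Lemma pres_winv_cancel x : pres_eq r (winv x ++ x) [::].
Proof.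
elim: x => [|l x IH]; first exact: pres_refl.
rewrite winv_cons -catA /=.
apply: pres_trans IH.
apply: rst_step.
have -> : linv l :: l :: x = [:: linv l; linv (linv l)] ++ x by rewrite linvK.
exact: pstep_free.
Qed.

Lemma pres_cancel_winv x : pres_eq r (x ++ winv x) [::].
Proof. by have := pres_winv_cancel (winv x); rewrite winvK. Qed.

Lemma pres_winv x y : pres_eq r x y -> pres_eq r (winv x) (winv y).
Proof.
move=> H.
apply: (@pres_trans _ (winv x ++ y ++ winv y)).
  have := pres_congl (winv x) (pres_sym (pres_cancel_winv y)); by rewrite cats0.
apply: (@pres_trans _ (winv x ++ x ++ winv y)).
  exact: pres_congl (pres_congr _ (pres_sym H)).
rewrite catA; have := pres_congr (winv y) (pres_winv_cancel x); by [].
Qed.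

Lemma pres_nseq k x y : pres_eq r x y -> pres_eq r (flatten (nseq k x)) (flatten (nseq k y)).
Proof. move=> H; elim: k => [|k IH] /=; [exact: pres_refl| exact: pres_cat]. Qed.
End Pres.

Fixpoint flatP (P : seq (int * int)) : seq int :=
  match P with [::] => [::] | p :: P' => p.1 :: p.2 :: flatP P' end.
Fixpoint swapf (P : seq (int * int)) (z : int) : int :=
  match P with
  | [::] => z
  | p :: P' => if z == p.1 then p.2 else if z == p.2 then p.1 else swapf P' z
  end.

Lemma swapf_out P z : z \notin flatP P -> swapf P z = z.
Proof.
elim: P => [|[a b] P IH] //=; rewrite !inE !negb_or => /andP[za /andP[zb zF]].
by rewrite (negPf za) (negPf zb) IH.
Qed.

Lemma swapf_in P z : z \in flatP P -> swapf P z \in flatP P.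
Proof.
elim: P => [|[a b] P IH] //=; rewrite !inE.
case: eqP => [_|_] /=; first by rewrite eqxx orbT.
case: eqP => [_|_] /=; first by rewrite eqxx.
by move=> /IH ->; rewrite !orbT.
Qed.

Lemma swapf_invol P : uniq (flatP P) -> forall z, swapf P (swapf P z) = z.
Proof.
elim: P => [|[a b] P IH] //= /andP[]; rewrite !inE negb_or => /andP[ab aF] /andP[bF uF] z.
case: (eqVneq z a) => [->|za].
  by rewrite eq_sym (negPf ab) eqxx.
case: (eqVneq z b) => [Ezb|zb]; first by rewrite /= eqxx Ezb.
have [w1 w2] : swapf P z != a /\ swapf P z != b.
  case: (boolP (z \in flatP P)) => zF.
    by have := swapf_in zF; split; apply/eqP => E; move: aF bF; rewrite -E => /negP; [|move=> _ /negP]; rewrite ?(swapf_in zF).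
  by rewrite swapf_out.
by rewrite (negPf w1) (negPf w2) IH.
Qed.

Lemma pair_flat P a b : (a, b) \in P -> a \in flatP P.
Proof.
elim: P => [//|[a' b'] P IH] /=; rewrite inE => /orP[/eqP [-> _]|/IH H].
  by rewrite inE eqxx.
by rewrite !inE H !orbT.
Qed.

Lemma swapf_pair P a b : uniq (flatP P) -> (a, b) \in P -> swapf P a = b.
Proof.
elim: P => [//|[a' b'] P IH] /= /andP[]; rewrite !inE negb_or => /andP[ab aF] /andP[bF uF].
move=> /orP[/eqP [-> ->]|H]; first by rewrite eqxx.
have aP := pair_flat H.
have -> : (a == a') = false by apply/negP => /eqP E; move: aF; rewrite -E aP.
have -> : (a == b') = false by apply/negP => /eqP E; move: bF; rewrite -E aP.
exact: IH.
Qed.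

Definition swp P (H : uniq (flatP P)) : perm := Perm (swapf_invol H) (swapf_invol H).

Lemma pres_map_reduce (A : eqType) (B : Type) (r : seq (B * bool)) (g : A -> B)
  (w : seq (A * bool)) :
  pres_eq r (map (fun l => (g l.1, l.2)) w) (map (fun l => (g l.1, l.2)) (reduce w)).
Proof.
elim: w => [|l w IH] /=; first exact: pres_refl.
apply: pres_trans (pres_congl [:: (g l.1, l.2)] IH) _.
case E: (reduce w) => [|l' rr] /=; first exact: pres_refl.
case: eqP => [->|_] /=; last exact: pres_refl.
apply: rst_step.
have := @pstep_free _ r [::] (map (fun l0 => (g l0.1, l0.2)) rr) (g l.1, l.2).
by [].
Qed.

Section Amal.
Variables (n m : nat) (alpha : 'I_n -> perm) (alpha' : 'I_m -> perm)
  (c : seq (option 'I_n * bool)) (d : seq (option 'I_m * bool)).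

Definition mapL (w : seq (option 'I_n * bool)) : seq ((option 'I_n + option 'I_m) * bool) :=
  map (fun l => (inl l.1, l.2)) w.
Definition mapR (w : seq (option 'I_m * bool)) : seq ((option 'I_n + option 'I_m) * bool) :=
  map (fun l => (inr l.1, l.2)) w.
Local Notation r := (amal_rel c d).

Lemma map_winv (A B : Type) (g : A -> B) (w : seq (A * bool)) :
  map (fun l => (g l.1, l.2)) (winv w) = winv (map (fun l => (g l.1, l.2)) w).
Proof. by rewrite /winv map_rev -!map_comp. Qed.

Lemma map_nseq_flat (A B : Type) (g : A -> B) (w : seq (A * bool)) k :
  map (fun l => (g l.1, l.2)) (flatten (nseq k w)) =
  flatten (nseq k (map (fun l => (g l.1, l.2)) w)).
Proof. by elim: k => [|k IH] //=; rewrite map_cat IH. Qed.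

Lemma pres_cd : pres_eq r (mapL c) (mapR d).
Proof.
apply: (@pres_trans _ _ _ (mapL c ++ (winv (mapR d) ++ mapR d))).
  have := pres_congl (mapL c) (pres_sym (pres_winv_cancel r (mapR d))).
  by rewrite cats0.
rewrite catA; apply: rst_step.
by have := @pstep_rel _ r [::] (mapR d).
Qed.

Lemma pres_zpow k : pres_eq r (mapL (zpow c k)) (mapR (zpow d k)).
Proof.
case: k => k /=; rewrite /mapL /mapR.
  have E1 := map_nseq_flat (@inl (option 'I_n) (option 'I_m)) c k.
  have E2 := map_nseq_flat (@inr (option 'I_n) (option 'I_m)) d k.
  rewrite E1 E2; apply: pres_nseq; exact: pres_cd.
have E1 := map_nseq_flat (@inl (option 'I_n) (option 'I_m)) (winv c) k.+1.
have E2 := map_nseq_flat (@inr (option 'I_n) (option 'I_m)) (winv d) k.+1.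
have E3 := map_winv (@inl (option 'I_n) (option 'I_m)) c.
have E4 := map_winv (@inr (option 'I_n) (option 'I_m)) d.
rewrite E1 E2 E3 E4; apply: pres_nseq; apply: pres_winv; exact: pres_cd.
Qed.

Definition inC w := exists k, reduce w = reduce (zpow c k).
Definition inD w := exists k, reduce w = reduce (zpow d k).

Lemma convL w k : reduce w = reduce (zpow c k) -> pres_eq r (mapL w) (mapR (zpow d k)).
Proof.
move=> E; apply: pres_trans (pres_map_reduce _ _ _) _; rewrite E.
apply: pres_trans (pres_sym (pres_map_reduce _ _ _)) _; exact: pres_zpow.
Qed.

Lemma convR w k : reduce w = reduce (zpow d k) -> pres_eq r (mapR w) (mapL (zpow c k)).
Proof.
move=> E; apply: pres_trans (pres_map_reduce _ _ _) _; rewrite E.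
apply: pres_trans (pres_sym (pres_map_reduce _ _ _)) _; exact: pres_sym (pres_zpow k).
Qed.

Definition Syl := (seq (option 'I_n * bool) + seq (option 'I_m * bool))%type.
Definition embs (s : Syl) := match s with inl w => mapL w | inr w => mapR w end.
Definition emb (S : seq Syl) := flatten (map embs S).
Definition splitW (W : seq ((option 'I_n + option 'I_m) * bool)) : seq Syl :=
  map (fun l => match l.1 with inl a => inl [:: (a, l.2)] | inr a => inr [:: (a, l.2)] end) W.

Lemma emb_split W : emb (splitW W) = W.
Proof. by elim: W => [|[[a|a] b] W IH] //; rewrite /emb /= in IH *; rewrite IH. Qed.

Definition goodS (s : Syl) := match s with inl w => ~ inC w | inr w => ~ inD w end.
Definition sideL (s : Syl) := if s is inl _ then true else false.
Fixpoint alt (S : seq Syl) : bool :=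
  match S with s1 :: ((s2 :: _) as S') => (sideL s1 != sideL s2) && alt S' | _ => true end.
Fixpoint allgood (S : seq Syl) : Prop :=
  match S with [::] => True | s :: S' => goodS s /\ allgood S' end.
Definition normal (S : seq Syl) :=
  S = [::] \/ (exists w, S = [:: inl w]) \/ [/\ S <> [::], alt S & allgood S].

Lemma dich1 s S2 : normal S2 ->
  (exists S3, (size S3 < (size S2).+1)%N /\ pres_eq r (emb (s :: S2)) (emb S3)) \/
  (exists S3, [/\ (size S3 <= (size S2).+1)%N, pres_eq r (emb (s :: S2)) (emb S3) & normal S3]).
Proof.
case=> [->|[[w2 ->]|[ne al ag]]].
- case: s => w.
    by right; exists [:: inl w]; split => //; [exact: pres_refl| right; left; exists w].
  case: (classic (inD w)) => [[k Hk]|nD].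
    right; exists [:: inl (zpow c k)]; split => //; last by right; left; eexists.
    by rewrite /emb /= !cats0; exact: convR.
  by right; exists [:: inr w]; split => //; [exact: pres_refl| right; right].
- case: s => w.
    left; exists [:: inl (w ++ w2)]; split => //.
    by rewrite /emb /= /mapL map_cat !cats0; exact: pres_refl.
  case: (classic (inD w)) => [[k Hk]|nD].
    left; exists [:: inl (zpow c k ++ w2)]; split => //.
    rewrite /emb /= /mapL map_cat !cats0; apply: pres_congr; exact: convR.
  case: (classic (inC w2)) => [[k Hk]|nC].
    left; exists [:: inr (w ++ zpow d k)]; split => //.
    rewrite /emb /= /mapR map_cat !cats0; apply: pres_congl; exact: convL.
  by right; exists [:: inr w; inl w2]; split => //; [exact: pres_refl| right; right].
- case: S2 ne al ag => [//|t T] _ al ag.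
  case: (boolP (sideL s == sideL t)) => Es.
    left; case: s t Es {al ag} => w [] w' //= _.
      exists (inl (w ++ w') :: T); split => //.
      by rewrite /emb /= /mapL map_cat catA; exact: pres_refl.
    exists (inr (w ++ w') :: T); split => //.
    by rewrite /emb /= /mapR map_cat catA; exact: pres_refl.
  case: (classic (goodS s)) => gs.
    by right; exists (s :: t :: T); split => //; [exact: pres_refl| right; right; split => //=; rewrite Es].
  left; case: s t Es gs {al ag} => w [] w' //= _ gs.
    have [k Hk] : inC w by apply: NNPP.
    exists (inr (zpow d k ++ w') :: T); split => //.
    rewrite /emb /= /mapR map_cat -catA; apply: pres_congr; exact: convL.
  have [k Hk] : inD w by apply: NNPP.
  exists (inl (zpow c k ++ w') :: T); split => //.
  rewrite /emb /= /mapL map_cat -catA; apply: pres_congr; exact: convR.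
Qed.

Lemma dich S :
  (exists S2, (size S2 < size S)%N /\ pres_eq r (emb S) (emb S2)) \/
  (exists S2, [/\ (size S2 <= size S)%N, pres_eq r (emb S) (emb S2) & normal S2]).
Proof.
elim: S => [|s S IH].
  by right; exists [::]; split => //; [exact: pres_refl| left].
case: IH => [[S2 [lt H]]|[S2 [le H nS2]]].
  by left; exists (s :: S2); split => //; apply: pres_congl.
have H' : pres_eq r (emb (s :: S)) (emb (s :: S2)) by apply: pres_congl.
case: (dich1 s nS2) => [[S3 [lt H3]]|[S3 [le3 H3 n3]]].
  left; exists S3; split; first by apply: leq_trans lt _; rewrite /= ltnS.
  exact: pres_trans H3.
right; exists S3; split => //; first by apply: leq_trans le3 _; rewrite /= ltnS.
exact: pres_trans H3.
Qed.

Lemma normalize S : exists S2, pres_eq r (emb S) (emb S2) /\ normal S2.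
Proof.
have [k] : exists k, (size S < k)%N by exists (size S).+1.
elim: k S => [//|k IH] S Hk.
case: (dich S) => [[S2 [lt H]]|[S2 [_ H n2]]]; last by exists S2.
have [S3 [H3 n3]] := IH S2 (leq_trans lt (Hk : (size S < k.+1)%N)).
by exists S3; split => //; exact: pres_trans H3.
Qed.

Local Notation gam t := (gamma_f alpha alpha' t).
Local Notation fa := (act_of alpha).
Local Notation fa' := (act_of alpha').

Lemma weval_mapL t w x : weval (gam t) (mapL w) x = weval fa w x.
Proof. by elim: w => [|[a b] w IH] //=; rewrite -IH. Qed.

Lemma weval_mapR t w x : weval (gam t) (mapR w) x = pinv t (weval fa' w (pfun t x)).
Proof.
elim: w => [|[a b] w IH] /=; first by rewrite pK.
have := IH; rewrite /weval /= => ->.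
by case: b => /=; rewrite pKV.
Qed.

Lemma pres_action t W W' : Zset alpha alpha' c d t -> pres_eq r W W' ->
  forall x, weval (gam t) W x = weval (gam t) W' x.
Proof.
move=> HZ; elim=> {W W'} [W W' H|W|W W' _ IH|W1 W2 W3 _ IH1 _ IH2] x.
- case: H => [u v l|u v]; rewrite !weval_cat.
    by case: l => g [] /=; rewrite ?pK ?pKV.
  congr (weval _ u _); set y := weval _ v x.
  rewrite /amal_rel ?weval_cat.
  set z := weval _ (winv (mapR d)) y.
  rewrite -[in RHS](weval_winvKV (gam t) (mapR d) y) -/z.
  by rewrite weval_mapL weval_mapR -HZ pK.
- by [].
- by rewrite IH.
- by rewrite IH1 IH2.
Qed.

Fixpoint inter (f : (option 'I_n + option 'I_m) -> perm) W x : seq int :=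
  match W with [::] => [:: x] | l :: W' => weval f W x :: inter f W' x end.

Lemma inter_head f W x : weval f W x \in inter f W x.
Proof. by case: W => [|l W] /=; rewrite inE eqxx. Qed.

Lemma pinv_agree (s t : perm) q : pfun s (pinv s q) = pfun t (pinv s q) -> pinv t q = pinv s q.
Proof. by rewrite pKV => E; rewrite {1}E pK. Qed.

Lemma agree_weval s t W x : agree s t (inter (gam s) W x) ->
  weval (gam t) W x = weval (gam s) W x.
Proof.
elim: W => [//|l W IH] Hag.
have IH' : weval (gam t) W x = weval (gam s) W x.
  apply: IH => z Hz; apply: Hag; by rewrite /= inE Hz orbT.
have Hy := inter_head (gam s) W x.
have Ho : agree s t [:: weval (gam s) (l :: W) x] by move=> z; rewrite inE => /eqP ->; apply: Hag; rewrite /= inE eqxx.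
have E : forall f, weval f (l :: W) x = if l.2 then pinv (f l.1) (weval f W x) else pfun (f l.1) (weval f W x) by [].
rewrite !E IH' in Ho *.
set y := weval (gam s) W x in Ho Hy *.
have Ey : pfun s y = pfun t y by apply: Hag; rewrite /= inE Hy orbT.
clear Hag IH IH' E.
case: l Ho => [[a|a] b] /= Ho //.
have Ho' := Ho _ (mem_head _ _).
by case: b Ho Ho' => /= Ho Ho'; rewrite -Ey; apply: pinv_agree.
Qed.


Section Ping.
Variables (sg : perm).
Hypothesis HZ : Zset alpha alpha' c d sg.
Hypothesis Hga : good_action fa c.
Hypothesis Hga' : good_action fa' d.

Definition core (s : Syl) x :=
  match s with inl w => weval fa w x | inr w => pinv sg (weval fa' w (pfun sg x)) end.
Definition cf x := weval fa c x = x.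

Lemma cf_of z : weval fa' d z = z -> cf (pinv sg z).
Proof.
move=> Hz; rewrite /cf; apply: (can_inj (pK sg)).
by rewrite HZ !pKV Hz.
Qed.

Lemma good_core s : goodS s -> forall U : seq int, exists p,
  [/\ p \notin U, core s p \notin U, cf p, cf (core s p) & core s p != p].
Proof.
case: s => w /= gw U.
- case: Hga => _ [_ [H3 _]].
  have nk : forall k, reduce w <> reduce (zpow c k) by move=> k E; apply: gw; exists k.
  have [x [Hx [c1 c2 c3]]] := H3 w nk (U ++ map (weval fa (winv w)) U).
  move: Hx; rewrite mem_cat negb_or => /andP[xU xM].
  exists x; split => //; last by apply/eqP.
  apply/negP => Hin; move/negP: xM; apply.
  by rewrite -(weval_winvK fa w x); apply: map_f.
- case: Hga' => _ [_ [H3 _]].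
  have nk : forall k, reduce w <> reduce (zpow d k) by move=> k E; apply: gw; exists k.
  have [z [Hz [c1 c2 c3]]] :=
    H3 w nk (map (pfun sg) U ++ map (fun u => weval fa' (winv w) (pfun sg u)) U).
  move: Hz; rewrite mem_cat negb_or => /andP[zU zM].
  exists (pinv sg z); rewrite pKV; split.
  + apply/negP => Hin; move/negP: zU; apply.
    by rewrite -(pKV sg z); apply: map_f.
  + apply/negP => Hin; move/negP: zM; apply.
    rewrite -(weval_winvK fa' w z) -(pKV sg (weval fa' w z)).
    exact: (map_f (fun u => weval fa' (winv w) (pfun sg u)) Hin).
  + exact: cf_of.
  + exact: cf_of.
  + apply/eqP => E; apply: c3; exact: (can_inj (pKV sg)).
Qed.

Fixpoint chain (pi : int -> int) (S : seq Syl) x :=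
  match S with
  | [::] => x
  | [:: s] => core s x
  | s :: S' => core s (pi (chain pi S' x))
  end.

Lemma pingpong S : allgood S -> S <> [::] -> forall U : seq int, exists x y P,
  [/\ uniq (x :: flatP P), y \notin x :: flatP P, cf y /\ y \notin U,
      (forall z, z \in flatP P -> cf z /\ z \notin U) &
      (forall pi : int -> int, (forall a b, (a, b) \in P -> pi a = b) -> chain pi S x = y)].
Proof.
elim: S => [//|s S IH] /= [gs agS] _ U.
case: S IH agS => [|s' S''] IH agS.
  have [p [p1 p2 p3 p4 p5]] := good_core gs U.
  exists p, (core s p), [::]; split => //.
  by rewrite inE.
have [x' [y' [P' [u1 u2 [u3 u3'] u4 u5]]]] := IH agS ltac:(by []) U.
have [p [p1 p2 p3 p4 p5]] := good_core gs (U ++ x' :: y' :: flatP P').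
move: p1 p2; rewrite !mem_cat !inE !negb_or => /and4P[pU px py pF] /and4P[qU qx qy qF].
exists x', (core s p), ((y', p) :: P'); split => //.
- move: u1 u2; rewrite /= !inE !negb_or => /andP[xF uF] /andP[yx yF].
  rewrite xF yF pF uF (eq_sym x' y') yx (eq_sym x' p) px (eq_sym y' p) py.
  by [].
- by rewrite /= !inE (negbTE qx) (negbTE qy) (negbTE p5) (negbTE qF).
- move=> z; rewrite /= !inE => /orP[/eqP ->|/orP[/eqP ->|zF]] //.
  exact: u4.
- move=> pi Hpi.
  idtac.
  rewrite u5; last by move=> a b H; apply: Hpi; rewrite inE H orbT.
  by rewrite (Hpi y' p) // inE eqxx.
Qed.

Section Swap.
Variables (P : seq (int * int)) (HP : uniq (flatP P)).
Definition tp := Defs.pcomp sg (swp HP).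

Lemma act_inl w v : weval (gam tp) (embs (inl w)) v = core (inl w) v.
Proof. exact: weval_mapL. Qed.
Lemma act_inr w v : weval (gam tp) (embs (inr w)) v = swapf P (core (inr w) (swapf P v)).
Proof. by rewrite /= weval_mapR. Qed.

Lemma eval_chain z : swapf P z = z -> forall s S, alt (s :: S) ->
  weval (gam tp) (emb (s :: S)) z =
  (if s is inr _ then swapf P else id) (chain (swapf P) (s :: S) z).
Proof.
move=> Hz s S; elim: S s => [|s' S IH] s.
  rewrite /emb /= cats0 => _; case: s => w; first exact: act_inl.
  by rewrite act_inr Hz.
move=> /= /andP[Hs Hal].
have -> : emb [:: s, s' & S] = embs s ++ emb (s' :: S) by [].
rewrite weval_cat IH //.
case: s s' Hs {IH Hal} => w [] w' //= _.
  by rewrite act_inl.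
by rewrite act_inr.
Qed.

Lemma t_Z : (forall z, z \in flatP P -> cf z) -> Zset alpha alpha' c d tp.
Proof.
move=> Hc x /=.
case: (boolP (x \in flatP P)) => xF.
  have cx := Hc x xF; rewrite /cf in cx; rewrite cx.
  have := Hc _ (swapf_in xF); rewrite /cf => E.
  by rewrite -HZ E.
have cxF : weval fa c x \notin flatP P.
  apply/negP => H; have := Hc _ H; rewrite /cf => E.
  by move: xF; rewrite -(weval_inj E) H.
by rewrite (swapf_out xF) (swapf_out cxF) HZ.
Qed.

Lemma t_agree L : (forall z, z \in flatP P -> z \notin L) -> agree sg tp L.
Proof.
move=> H x xL /=; rewrite swapf_out //.
by apply/negP => xF; move: (H x xF); rewrite xL.
Qed.
End Swap.
End Ping.

Lemma density sg : good_action fa c -> good_action fa' d -> Zset alpha alpha' c d sg ->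
  forall W, ~ pres_eq r W [::] -> forall L : seq int,
  exists t, [/\ Zset alpha alpha' c d t, agree sg t L & exists x, weval (gam t) W x <> x].
Proof.
move=> Hga Hga' HZ W nW L.
have [S2 [HS nS]] := normalize (splitW W).
rewrite emb_split in HS.
case: nS => [E|[[w E]|[ne al ag]]].
- by exfalso; apply: nW; rewrite E in HS.
- subst S2.
  have nred : reduce w <> [::].
    move=> Ew; apply: nW; apply: pres_trans HS _.
    rewrite /emb /= cats0; apply: pres_trans (pres_map_reduce _ _ _) _; rewrite Ew; exact: pres_refl.
  have [x Hx] : exists x, weval fa w x <> x.
    apply: NNPP => H; apply: nred; case: Hga => H1 _; apply: H1 => x.
    by apply: NNPP => Hx; apply: H; exists x.
  exists sg; split => //.
  by exists x; rewrite (pres_action HZ HS) /emb /= cats0 weval_mapL.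
- have [x [y [P [u1 u2 [u3 u3'] u4 u5]]]] := pingpong HZ Hga Hga' ag ne L.
  have HP : uniq (flatP P) by case/andP: u1.
  have Zt := t_Z HZ HP (fun z H => (u4 z H).1).
  exists (tp sg HP); split => //.
    by apply: t_agree => z /u4 [].
  exists x.
  rewrite (pres_action Zt HS).
  case: S2 ne al ag u5 HS => [//|s S] _ al _ u5 _.
  have xF : x \notin flatP P by case/andP: u1.
  have yF : y \notin flatP P by move: u2; rewrite inE negb_or => /andP[].
  have yx : y != x by move: u2; rewrite inE negb_or => /andP[].
  rewrite (eval_chain sg HP (swapf_out xF) al) (u5 _ (fun a b => swapf_pair HP)).
  by case: s {al u5} => w /=; [|rewrite (swapf_out yF)]; apply/eqP.
Qed.
End Amal.

Unset Implicit Arguments.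

Theorem proposition12 (n m : nat) (alpha : 'I_n -> perm) (alpha' : 'I_m -> perm)
  (c : seq (option 'I_n * bool)) (d : seq (option 'I_m * bool)) :
  (0 < n)%N -> (0 < m)%N ->
  c <> [::] -> cyc_reduced c -> expsum None c = 0 ->
  d <> [::] -> cyc_reduced d -> expsum None d = 0 ->
  good_action (act_of alpha) c -> good_action (act_of alpha') d ->
  generic_in (Zset alpha alpha' c d) (O1 alpha alpha' c d).
Proof.
move=> _ _ _ _ _ _ _ _ Hga Hga'.
pose FW (W : seq ((option 'I_n + option 'I_m) * bool)) (s : perm) :=
  [/\ Zset alpha alpha' c d s, ~ pres_eq (amal_rel c d) W [::] &
      forall x, weval (gamma_f alpha alpha' s) W x = x].
pose F k s := if @unpickle (seq ((option 'I_n + option 'I_m) * bool)) k is Some W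
  then FW W s else False.
split; first by move=> s [].
exists F; split.
- move=> k; rewrite /F; case: unpickle => [W|]; last first.
    split; first split.
    - by move=> s [].
    - by move=> s _ _; exists [::] => t _ _ [].
    - by move=> s [].
  split.
    split; first by move=> s [].
    move=> s Zs nF.
    case: (classic (pres_eq (amal_rel c d) W [::])) => Hp.
      by exists [::] => t _ _ [].
    have [x Hx] : exists x, weval (gamma_f alpha alpha' s) W x <> x.
      apply: NNPP => H; apply: nF; split => // x.
      by apply: NNPP => Hx; apply: H; exists x.
    exists (inter (gamma_f alpha alpha' s) W x) => t Zt ag [_ _ H].
    by apply: Hx; rewrite -(agree_weval ag) H.
  move=> s [Zs nW _] L.
  have [t [Zt ag [x Hx]]] := density Hga Hga' Zs nW L.
  by exists t; split => // [[_ _ H]]; apply: Hx.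
- move=> s; split.
    move=> [Zs nO].
    have [W [HW nW]] : exists W, (forall x, weval (gamma_f alpha alpha' s) W x = x) /\
                                  ~ pres_eq (amal_rel c d) W [::].
      apply: NNPP => H; apply: nO; split => // W HW.
      by apply: NNPP => nW; apply: H; exists W.
    by exists (pickle W); rewrite /F pickleK.
  move=> [k]; rewrite /F; case: unpickle => [W|//] [Zs nW triv].
  by split => // [[_ H]]; apply: nW; apply: H.
Qed.
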